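(* Assume (F1)–(F3), let $\tau\ge0$ and $c\le0$. Let $w_*\in(0,1)$ be such that $f(w_* )=1$ and $f(w)>1$ for $0\le w<w_*$, and suppose $f'(w)<0$ for $w_*\le w\le w_0$. If $w$ is a solution of problem (P) with these $\tau,c$ such that $w'(x)\le0$ for all $x\in\mathbb R$, then $w'(x)<0$ for all $x\in\mathbb R$.
   Context: $f:\mathbb R\to\mathbb R$ is $C^4$ with bounded derivatives and satisfies: (F1) $f(w)>0$ for $0\le w<1$, $f(1)=0$, $f'(1)>-1$; (F2) $f(0)>1$, $f'(0)>0$, and $f(w)>1$ for $0\le w<w_*$ for some $w_*\in(0,1)$; (F3) the equation $f(w)=1-w$ has exactly one solution $w_0$ in $(0,1)$, and $f'(w_0)<-1$; hence $f(w)>1-w$ for $0\le w<w_0$ and $f(w)<1-w$ for $w_0<w<1$. Problem (P) for given $\tau\ge0$, $c\in\mathbb R$: find $w\in C^2(\mathbb R)$ with $w''(x)+cw'(x)+w(x)\big(1-w(x)-f(w(x+c\tau))\big)=0$ for all $x$, and $w(-\infty)=1$, $w(+\infty)=0$. *)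

(* Defs.v *)
From Stdlib Require Import Reals Lra.
Open Scope R_scope.

Definition C4_bounded_derivs (f f1 f2 f3 f4 : R -> R) : Prop :=
  (forall x, derivable_pt_lim f x (f1 x)) /\
  (forall x, derivable_pt_lim f1 x (f2 x)) /\
  (forall x, derivable_pt_lim f2 x (f3 x)) /\
  (forall x, derivable_pt_lim f3 x (f4 x)) /\
  continuity f4 /\
  (exists M, forall x,
      Rabs (f1 x) <= M /\ Rabs (f2 x) <= M /\ Rabs (f3 x) <= M /\ Rabs (f4 x) <= M).

Definition F1 (f f1 : R -> R) : Prop :=
  (forall w, 0 <= w < 1 -> f w > 0) /\ f 1 = 0 /\ f1 1 > -1.

Definition F2 (f f1 : R -> R) : Prop :=
  f 0 > 1 /\ f1 0 > 0 /\
  exists ws, 0 < ws < 1 /\ forall w, 0 <= w < ws -> f w > 1.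

Definition F3_root (f f1 : R -> R) (w0 : R) : Prop :=
  0 < w0 < 1 /\ f w0 = 1 - w0 /\
  (forall w, 0 < w < 1 -> f w = 1 - w -> w = w0) /\
  f1 w0 < -1.

Definition lim_minus_infty (u : R -> R) (l : R) : Prop :=
  forall eps, eps > 0 -> exists A, forall x, x < A -> Rabs (u x - l) < eps.

Definition lim_plus_infty (u : R -> R) (l : R) : Prop :=
  forall eps, eps > 0 -> exists A, forall x, x > A -> Rabs (u x - l) < eps.

Definition solves_P (f : R -> R) (tau c : R) (w w1 w2 : R -> R) : Prop :=
  (forall x, derivable_pt_lim w x (w1 x)) /\
  (forall x, derivable_pt_lim w1 x (w2 x)) /\
  continuity w2 /\
  (forall x, w2 x + c * w1 x + w x * (1 - w x - f (w (x + c * tau))) = 0) /\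
  lim_minus_infty w 1 /\ lim_plus_infty w 0.

(* Main.v *)
Require Import Defs.
From Stdlib Require Import Reals Lra.
Open Scope R_scope.

Lemma deriv_sign (g : R -> R) (x l : R) : derivable_pt_lim g x l -> l > 0 ->
  exists d, d > 0 /\ forall h, 0 < h < d -> g (x + h) > g x /\ g (x - h) < g x.
Proof.
  intros Hd Hl. destruct (Hd l Hl) as [del Hdel].
  exists del. split. apply cond_pos. intros h Hh.
  assert (A1 : Rabs ((g (x + h) - g x) / h - l) < l).
  { apply Hdel. lra. rewrite Rabs_right; lra. }
  assert (A2 : Rabs ((g (x + - h) - g x) / - h - l) < l).
  { apply Hdel. lra. rewrite Rabs_left; lra. }
  apply Rabs_def2 in A1. apply Rabs_def2 in A2.
  replace (x + - h) with (x - h) in A2 by ring.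
  destruct A1 as [_ A1]. destruct A2 as [_ A2].
  split.
  - assert (0 < (g (x + h) - g x) / h) by lra.
    assert (g (x+h) - g x = ((g (x + h) - g x) / h) * h) by (field; lra).
    nra.
  - assert (0 < (g (x - h) - g x) / - h) by lra.
    assert (g (x-h) - g x = ((g (x - h) - g x) / - h) * (-h)) by (field; lra).
    nra.
Qed.

Lemma deriv_neg_ext (g : R -> R) (x l : R) : derivable_pt_lim g x l -> l < 0 ->
  exists d, d > 0 /\ forall h, 0 < h < d -> g (x + h) < g x /\ g (x - h) > g x.
Proof.
  intros Hd Hl.
  destruct (deriv_sign (fun y => - g y) x (- l)) as [d [Hd0 Hdd]].
  - apply (derivable_pt_lim_opp g x l Hd).
  - lra.
  - exists d. split; auto. intros h Hh. destruct (Hdd h Hh). lra.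
Qed.

Lemma gronwall_fwd (E E' : R -> R) (L a : R) :
  (forall x, derivable_pt_lim E x (E' x)) -> (forall x, 0 <= E x) -> E a = 0 ->
  (forall x, a <= x -> E' x <= L * E x) -> forall x, a <= x -> E x = 0.
Proof.
  intros Hd Hpos Ha HL x Hx.
  destruct (Req_dec x a) as [->|Hne]; auto.
  set (G := fun y => E y * exp (- (L * y))).
  set (G' := fun y => E' y * exp (- (L * y)) + E y * (exp (- (L * y)) * (- L))).
  assert (HG : forall y, derivable_pt_lim G y (G' y)).
  { intro y. unfold G, G'.
    apply (derivable_pt_lim_mult E (fun y => exp (- (L * y)))).
    apply Hd.
    apply (derivable_pt_lim_comp (fun y => - (L * y)) exp).
    replace (- L) with (- (L * 1)) by ring.
    apply (derivable_pt_lim_opp (fun y => L * y)).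
    apply (derivable_pt_lim_scal id L y 1). apply derivable_pt_lim_id.
    apply derivable_pt_lim_exp. }
  destruct (MVT_cor2 G G' a x) as [c [Hc1 Hc2]]; [lra| intros; apply HG|].
  assert (G' c <= 0).
  { unfold G'. specialize (HL c ltac:(lra)). pose proof (exp_pos (- (L * c))). nra. }
  assert (G a = 0) by (unfold G; rewrite Ha; ring).
  assert (G x <= 0) by nra.
  unfold G in *. pose proof (exp_pos (- (L * x))). specialize (Hpos x). nra.
Qed.

Lemma gronwall_bwd (E E' : R -> R) (L a : R) :
  (forall x, derivable_pt_lim E x (E' x)) -> (forall x, 0 <= E x) -> E a = 0 ->
  (forall x, x <= a -> - (L * E x) <= E' x) -> forall x, x <= a -> E x = 0.
Proof.
  intros Hd Hpos Ha HL x Hx.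
  destruct (Req_dec x a) as [->|Hne]; auto.
  set (G := fun y => E y * exp (L * y)).
  set (G' := fun y => E' y * exp (L * y) + E y * (exp (L * y) * L)).
  assert (HG : forall y, derivable_pt_lim G y (G' y)).
  { intro y. unfold G, G'.
    apply (derivable_pt_lim_mult E (fun y => exp (L * y))).
    apply Hd.
    apply (derivable_pt_lim_comp (fun y => L * y) exp).
    assert (HL1: derivable_pt_lim (fun y => L * y) y (L * 1)).
    apply (derivable_pt_lim_scal id L y 1). apply derivable_pt_lim_id.
    rewrite Rmult_1_r in HL1. exact HL1.
    apply derivable_pt_lim_exp. }
  destruct (MVT_cor2 G G' x a) as [c [Hc1 Hc2]]; [lra| intros; apply HG|].
  assert (G' c >= 0).
  { unfold G'. specialize (HL c ltac:(lra)). pose proof (exp_pos (L * c)). nra. }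
  assert (G a = 0) by (unfold G; rewrite Ha; ring).
  assert (G x <= 0) by nra.
  unfold G in *. pose proof (exp_pos (L * x)). specialize (Hpos x). nra.
Qed.

Lemma energy_bound (p q r K : R) : 0 <= K -> Rabs r <= K * (Rabs p + Rabs q) ->
  Rabs (2 * p * q + 2 * q * r) <= (1 + 3 * K) * (p * p + q * q).
Proof.
  intros HK Hr.
  assert (Rabs (2*p*q) <= p*p + q*q).
  { rewrite !Rabs_mult. rewrite (Rabs_right 2) by lra.
    pose proof (Rabs_pos p). pose proof (Rabs_pos q).
    assert (p*p = Rabs p * Rabs p) by (rewrite <- Rabs_mult; rewrite Rabs_right; nra).
    assert (q*q = Rabs q * Rabs q) by (rewrite <- Rabs_mult; rewrite Rabs_right; nra).
    pose proof (pow2_ge_0 (Rabs p - Rabs q)). nra. }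
  assert (Rabs (2*q*r) <= 3 * K * (p*p + q*q)).
  { rewrite !Rabs_mult. rewrite (Rabs_right 2) by lra.
    pose proof (Rabs_pos p). pose proof (Rabs_pos q). pose proof (Rabs_pos r).
    assert (p*p = Rabs p * Rabs p) by (rewrite <- Rabs_mult; rewrite Rabs_right; nra).
    assert (q*q = Rabs q * Rabs q) by (rewrite <- Rabs_mult; rewrite Rabs_right; nra).
    assert (Rabs q * Rabs r <= Rabs q * (K * (Rabs p + Rabs q))) by (apply Rmult_le_compat_l; auto).
    pose proof (pow2_ge_0 (Rabs p - Rabs q)). nra. }
  pose proof (Rabs_triang (2*p*q) (2*q*r)). nra.
Qed.

Lemma uniq_fwd (p q r : R -> R) (K a : R) : 0 <= K ->
  (forall x, derivable_pt_lim p x (q x)) -> (forall x, derivable_pt_lim q x (r x)) ->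
  (forall x, a <= x -> Rabs (r x) <= K * (Rabs (p x) + Rabs (q x))) ->
  p a = 0 -> q a = 0 -> forall x, a <= x -> p x = 0.
Proof.
  intros HK Hp Hq Hr Pa Qa x Hx.
  assert (E0 : (fun y => p y * p y + q y * q y) x = 0).
  { apply (gronwall_fwd (fun y => p y * p y + q y * q y) (fun y => (q y * p y + p y * q y) + (r y * q y + q y * r y)) (1 + 3*K) a).
    - intro y. apply (derivable_pt_lim_plus (fun y => p y * p y) (fun y => q y * q y)).
      apply (derivable_pt_lim_mult p p); auto.
      apply (derivable_pt_lim_mult q q); auto.
    - intro y; nra.
    - simpl; rewrite Pa, Qa; ring.
    - intros y Hy. pose proof (energy_bound (p y) (q y) (r y) K HK (Hr y Hy)).
      pose proof (Rle_abs (-(2 * p y * q y + 2 * q y * r y))). rewrite Rabs_Ropp in H0. pose proof (Rle_abs (2 * p y * q y + 2 * q y * r y)). simpl. lra.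
    - auto. }
  simpl in E0. nra.
Qed.

Lemma uniq_bwd (p q r : R -> R) (K a : R) : 0 <= K ->
  (forall x, derivable_pt_lim p x (q x)) -> (forall x, derivable_pt_lim q x (r x)) ->
  (forall x, x <= a -> Rabs (r x) <= K * (Rabs (p x) + Rabs (q x))) ->
  p a = 0 -> q a = 0 -> forall x, x <= a -> p x = 0.
Proof.
  intros HK Hp Hq Hr Pa Qa x Hx.
  assert (E0 : (fun y => p y * p y + q y * q y) x = 0).
  { apply (gronwall_bwd (fun y => p y * p y + q y * q y) (fun y => (q y * p y + p y * q y) + (r y * q y + q y * r y)) (1 + 3*K) a).
    - intro y. apply (derivable_pt_lim_plus (fun y => p y * p y) (fun y => q y * q y)).
      apply (derivable_pt_lim_mult p p); auto.
      apply (derivable_pt_lim_mult q q); auto.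
    - intro y; nra.
    - simpl; rewrite Pa, Qa; ring.
    - intros y Hy. pose proof (energy_bound (p y) (q y) (r y) K HK (Hr y Hy)).
      pose proof (Rle_abs (-(2 * p y * q y + 2 * q y * r y))). rewrite Rabs_Ropp in H0. pose proof (Rle_abs (2 * p y * q y + 2 * q y * r y)). simpl. lra.
    - auto. }
  simpl in E0. nra.
Qed.

Lemma dlim_ext (g h : R -> R) (x l : R) : (forall y, g y = h y) ->
  derivable_pt_lim g x l -> derivable_pt_lim h x l.
Proof.
  intros Hgh Hd eps He. destruct (Hd eps He) as [del Hdel]. exists del.
  intros k Hk Hk'. rewrite <- !Hgh. apply Hdel; auto.
Qed.

Lemma root_lemma (f f1 : R -> R) (w0 : R) :
  (forall x, derivable_pt_lim f x (f1 x)) -> f 1 = 0 -> f1 1 > -1 ->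
  (forall w, 0 < w < 1 -> f w = 1 - w -> w = w0) ->
  forall v, 0 < v < 1 -> f v >= 1 - v -> v <= w0.
Proof.
  intros Hf F1 F1' Hu v Hv Hfv.
  destruct (Rle_or_lt v w0) as [|Hlt]; auto. exfalso.
  destruct (Req_dec (f v) (1 - v)) as [Heq|Hne].
  { apply Hu in Heq; lra. }
  assert (Hg1 : forall z, derivable_pt_lim (fun z => f z + z) z (f1 z + 1)).
  { intro z. apply (derivable_pt_lim_plus f id). apply Hf. apply derivable_pt_lim_id. }
  destruct (deriv_sign (fun z => f z + z) 1 (f1 1 + 1) (Hg1 1) ltac:(lra)) as [d [Hd Hdd]].
  set (h := Rmin (d/2) ((1 - v)/2)).
  assert (Hh : 0 < h < d /\ h <= (1-v)/2).
  { unfold h. split. split. apply Rmin_glb_lt; lra. pose proof (Rmin_l (d/2) ((1-v)/2)); lra.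
    apply Rmin_r. }
  destruct (Hdd h ltac:(lra)) as [_ H2].
  set (g := fun z => 1 - (f z + z)).
  assert (Hg : forall z, derivable_pt_lim g z (0 - (f1 z + 1))).
  { intro z. unfold g. apply (derivable_pt_lim_minus (fct_cte 1) (fun z => f z + z)).
    apply derivable_pt_lim_const. apply Hg1. }
  assert (Hc : continuity g).
  { intro z. apply (derivable_continuous_pt g z (exist _ _ (Hg z))). }
  destruct (IVT g v (1 - h) Hc ltac:(lra)) as [z [Hz Hgz]].
  - unfold g. lra.
  - unfold g. rewrite F1 in H2. lra.
  - unfold g in Hgz. assert (z = w0) by (apply Hu; lra). lra.
Qed.

Theorem lemma3p2 (f f1 f2 f3 f4 : R -> R) (w0 ws tau c : R)
  (w w1 w2 : R -> R) :
  C4_bounded_derivs f f1 f2 f3 f4 ->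
  F1 f f1 -> F2 f f1 -> F3_root f f1 w0 ->
  tau >= 0 -> c <= 0 ->
  0 < ws < 1 -> f ws = 1 -> (forall v, 0 <= v < ws -> f v > 1) ->
  (forall v, ws <= v <= w0 -> f1 v < 0) ->
  solves_P f tau c w w1 w2 ->
  (forall x, w1 x <= 0) ->
  forall x, w1 x < 0.
Proof.
  intros HC4 HF1 _ HF3 Htau Hc Hws Hfws Hws' Hf1neg HP HW1 x0.
  destruct HC4 as [Hf [_ [_ [_ [_ [M HM]]]]]].
  destruct HF1 as [F1a [F1b F1c]].
  destruct HF3 as [Hw0 [Hfw0 [Huniq Hf1w0]]].
  destruct HP as [Hw [Hw1 [_ [Heq [Hlm Hlp]]]]].
  assert (HM0 : 0 <= M) by (destruct (HM 0) as [H _]; pose proof (Rabs_pos (f1 0)); lra).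
  assert (Lip : forall a b, Rabs (f a - f b) <= M * Rabs (a - b)).
  { intros a b. destruct (Rtotal_order a b) as [Hab|[Hab|Hab]].
    - destruct (MVT_cor2 f f1 a b Hab (fun c _ => Hf c)) as [e [He _]].
      rewrite <- Rabs_Ropp, <- (Rabs_Ropp (a - b)).
      replace (- (f a - f b)) with (f b - f a) by ring. rewrite He.
      replace (- (a - b)) with (b - a) by ring. rewrite Rabs_mult.
      apply Rmult_le_compat_r. apply Rabs_pos. apply HM.
    - subst. rewrite !Rminus_diag, Rabs_R0. lra.
    - destruct (MVT_cor2 f f1 b a Hab (fun c _ => Hf c)) as [e [He _]].
      rewrite He, Rabs_mult. apply Rmult_le_compat_r. apply Rabs_pos. apply HM. }
  assert (mono : forall x y, x <= y -> w y <= w x).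
  { intros x y Hxy. destruct (Req_dec x y) as [->|Hne]; [lra|].
    destruct (MVT_cor2 w w1 x y ltac:(lra) (fun c _ => Hw c)) as [e [He _]].
    specialize (HW1 e). nra. }
  assert (le1 : forall x, w x <= 1).
  { intro x. destruct (Rle_or_lt (w x) 1) as [|H]; auto. exfalso.
    destruct (Hlm (w x - 1) ltac:(lra)) as [A HA].
    set (y := Rmin x A - 1).
    assert (y <= x) by (unfold y; pose proof (Rmin_l x A); lra).
    assert (y < A) by (unfold y; pose proof (Rmin_r x A); lra).
    specialize (HA y H1). pose proof (mono y x H0). apply Rabs_def2 in HA. lra. }
  assert (ge0 : forall x, 0 <= w x).
  { intro x. destruct (Rle_or_lt 0 (w x)) as [|H]; auto. exfalso.
    destruct (Hlp (- w x) ltac:(lra)) as [A HA].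
    set (y := Rmax x A + 1).
    assert (x <= y) by (unfold y; pose proof (Rmax_l x A); lra).
    assert (y > A) by (unfold y; pose proof (Rmax_r x A); lra).
    specialize (HA y H1). pose proof (mono x y H0). apply Rabs_def2 in HA. lra. }
  assert (Hw2 : forall x, w2 x = - (c * w1 x) - w x * (1 - w x - f (w (x + c * tau)))).
  { intro x. specialize (Heq x). lra. }
  assert (Hbound0 : forall x, Rabs (w2 x) <= Rabs c * Rabs (w1 x) + Rabs (w x) * Rabs (1 - w x - f (w (x + c * tau)))).
  { intro x. rewrite Hw2. unfold Rminus at 1.
    eapply Rle_trans. apply Rabs_triang. rewrite !Rabs_Ropp, !Rabs_mult. lra. }
  assert (Hbound : forall x, Rabs (w2 x) <= Rabs c * Rabs (w1 x) + Rabs (1 - w x - f (w (x + c * tau)))).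
  { intro x. eapply Rle_trans. apply Hbound0.
    apply Rplus_le_compat_l. pose proof (Rabs_pos (1 - w x - f (w (x + c * tau)))).
    rewrite (Rabs_right (w x)) by (specialize (ge0 x); lra).
    specialize (le1 x). nra. }
  assert (max0 : forall y, w1 y = 0 -> w2 y = 0).
  { intros y Hy. destruct (Rtotal_order (w2 y) 0) as [H|[H|H]]; auto; exfalso.
    - destruct (deriv_neg_ext w1 y (w2 y) (Hw1 y) H) as [d [Hd Hdd]].
      destruct (Hdd (d/2) ltac:(lra)) as [_ H2]. specialize (HW1 (y - d/2)). lra.
    - destruct (deriv_sign w1 y (w2 y) (Hw1 y) H) as [d [Hd Hdd]].
      destruct (Hdd (d/2) ltac:(lra)) as [H2 _]. specialize (HW1 (y + d/2)). lra. }
  assert (Hshift : forall k x, derivable_pt_lim (fun y => w y - k) x (w1 x)).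
  { intros k x. pose proof (derivable_pt_lim_minus w (fct_cte k) x (w1 x) 0 (Hw x) (derivable_pt_lim_const k x)) as H.
    rewrite Rminus_0_r in H. exact H. }
  assert (Hct : c * tau <= 0) by nra.
  destruct (Rlt_or_le (w1 x0) 0) as [|Hx0]; auto. exfalso.
  assert (H10 : w1 x0 = 0) by (specialize (HW1 x0); lra).
  assert (H20 := max0 x0 H10).
  assert (Hstep : forall y, w1 y = 0 -> 0 < w y < 1 ->
             w y <= w (y + c * tau) /\ ws <= w (y + c * tau) <= w0).
  { intros y Hy Huy. pose proof (max0 y Hy) as Hy2.
    pose proof (mono (y + c*tau) y ltac:(lra)) as Huv.
    assert (Hfv : f (w (y + c * tau)) = 1 - w y).
    { specialize (Heq y). rewrite Hy, Hy2 in Heq.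
      assert (w y * (1 - w y - f (w (y + c * tau))) = 0) by lra.
      apply Rmult_integral in H. destruct H; lra. }
    pose proof (le1 (y + c*tau)). split; auto.
    assert (w (y + c * tau) < 1).
    { destruct (Req_dec (w (y + c*tau)) 1) as [E|E]; [|lra]. rewrite E, F1b in Hfv. lra. }
    assert (ws <= w (y + c * tau)).
    { destruct (Rle_or_lt ws (w (y + c*tau))); auto.
      assert (f (w (y + c * tau)) > 1) by (apply Hws'; split; [apply ge0|auto]). lra. }
    split; auto. apply (root_lemma f f1 w0 Hf F1b F1c Huniq); lra. }
  destruct (Req_dec (w x0) 0) as [U0|U0].
  {
    assert (Hz : forall x, x <= x0 -> w x = 0).
    { apply (uniq_bwd w w1 w2 (Rabs c + (2 + Rabs (f 0) + M)) x0); auto.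
      - pose proof (Rabs_pos c). pose proof (Rabs_pos (f 0)). lra.
      - intros x _. eapply Rle_trans. apply Hbound0.
        set (v := w (x + c * tau)).
        assert (Rabs (f v - f 0) <= M * Rabs (v - 0)) by apply Lip.
        assert (Rabs (v - 0) <= 1) by (unfold v; rewrite Rminus_0_r, Rabs_right; [apply le1|apply Rle_ge, ge0]).
        assert (Ha : Rabs (1 - w x - f v) <= 2 + Rabs (f 0) + M).
        { replace (1 - w x - f v) with (1 - w x - f 0 - (f v - f 0)) by ring.
          eapply Rle_trans. apply Rabs_triang. rewrite Rabs_Ropp.
          assert (Rabs (1 - w x - f 0) <= 2 + Rabs (f 0)).
          { unfold Rminus. eapply Rle_trans. apply Rabs_triang. rewrite Rabs_Ropp.
            eapply Rle_trans. apply Rplus_le_compat_r. apply Rabs_triang.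
            rewrite Rabs_R1, Rabs_Ropp, (Rabs_right (w x)) by (apply Rle_ge, ge0).
            specialize (le1 x). lra. }
          nra. }
        pose proof (Rabs_pos (w x)). pose proof (Rabs_pos (w1 x)). pose proof (Rabs_pos c).
        pose proof (Rabs_pos (f 0)). pose proof (Rabs_pos (1 - w x - f v)).
        assert (Rabs (w x) * Rabs (1 - w x - f v) <= Rabs (w x) * (2 + Rabs (f 0) + M)) by
          (apply Rmult_le_compat_l; auto).
        nra. }
    destruct (Hlm (1/2) ltac:(lra)) as [A HA].
    specialize (HA (Rmin A x0 - 1) ltac:(pose proof (Rmin_l A x0); lra)).
    rewrite Hz in HA by (pose proof (Rmin_r A x0); lra).
    rewrite Rminus_0_l, Rabs_Ropp, Rabs_R1 in HA. lra. }
  pose proof (ge0 x0) as G0. pose proof (le1 x0) as L0.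
  destruct (Req_dec (w x0) 1) as [U1|U1].
  {
    assert (Hz : forall x, x0 <= x -> w x - 1 = 0).
    { apply (uniq_fwd (fun y => w y - 1) w1 w2 (Rabs c + 1 + M) x0); auto.
      - pose proof (Rabs_pos c). lra.
      - intros x _. eapply Rle_trans. apply Hbound.
        set (v := w (x + c * tau)).
        pose proof (mono (x + c*tau) x ltac:(lra)). pose proof (le1 (x + c*tau)).
        assert (Rabs (f v - f 1) <= M * Rabs (v - 1)) by apply Lip.
        rewrite F1b, Rminus_0_r in H1.
        assert (Rabs (v - 1) <= Rabs (w x - 1)).
        { rewrite !Rabs_left1; unfold v in *; lra. }
        assert (Rabs (1 - w x - f v) <= (1 + M) * Rabs (w x - 1)).
        { replace (1 - w x - f v) with (- (w x - 1) - f v) by ring.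
          eapply Rle_trans. apply Rabs_triang. rewrite !Rabs_Ropp. nra. }
        pose proof (Rabs_pos (w1 x)). pose proof (Rabs_pos c). pose proof (Rabs_pos (w x - 1)).
        nra.
      - simpl. lra. }
    destruct (Hlp (1/2) ltac:(lra)) as [A HA].
    specialize (HA (Rmax A x0 + 1) ltac:(pose proof (Rmax_l A x0); lra)).
    assert (w (Rmax A x0 + 1) = 1) by (pose proof (Hz (Rmax A x0 + 1) ltac:(pose proof (Rmax_r A x0); lra)); lra).
    rewrite H, Rminus_0_r, Rabs_R1 in HA. lra. }
  assert (Hu : 0 < w x0 < 1) by lra.
  destruct (Req_dec (c * tau) 0) as [CT|CT].
  {
    destruct (Hstep x0 H10 Hu) as [_ Hv].
    assert (Hfu : f (w x0) = 1 - w x0).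
    { specialize (Heq x0). rewrite H10, H20, CT, Rplus_0_r in Heq.
      assert (w x0 * (1 - w x0 - f (w x0)) = 0) by lra.
      apply Rmult_integral in H. destruct H; lra. }
    assert (Uw0 : w x0 = w0) by (apply Huniq; auto).
    assert (Hz : forall x, x0 <= x -> w x - w0 = 0).
    { apply (uniq_fwd (fun y => w y - w0) w1 w2 (Rabs c + 1 + M) x0); auto.
      - pose proof (Rabs_pos c). lra.
      - intros x _. eapply Rle_trans. apply Hbound. rewrite CT, Rplus_0_r.
        assert (Rabs (f w0 - f (w x)) <= M * Rabs (w0 - w x)) by apply Lip.
        rewrite (Rabs_minus_sym w0 (w x)) in H.
        assert (Rabs (1 - w x - f (w x)) <= (1 + M) * Rabs (w x - w0)).
        { replace (1 - w x - f (w x)) with (- (w x - w0) + (f w0 - f (w x))) by (rewrite Hfw0; ring).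
          eapply Rle_trans. apply Rabs_triang. rewrite !Rabs_Ropp. nra. }
        pose proof (Rabs_pos (w1 x)). pose proof (Rabs_pos c). pose proof (Rabs_pos (w x - w0)).
        nra.
      - simpl. lra. }
    destruct (Hlp w0 ltac:(lra)) as [A HA].
    specialize (HA (Rmax A x0 + 1) ltac:(pose proof (Rmax_l A x0); lra)).
    assert (w (Rmax A x0 + 1) = w0) by (pose proof (Hz (Rmax A x0 + 1) ltac:(pose proof (Rmax_r A x0); lra)); lra).
    rewrite H, Rminus_0_r, Rabs_right in HA; lra. }
  assert (CT' : c * tau < 0) by lra.
  set (d := c * tau) in *.
  assert (T : forall y, w1 y = 0 -> 0 < w y < 1 -> w1 (y + d) = 0).
  { intros y Hy Huy. destruct (Hstep y Hy Huy) as [Huv Hv].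
    destruct (Req_dec (w1 (y + d)) 0) as [|Hne]; auto. exfalso.
    assert (Hneg : w1 (y + d) < 0) by (specialize (HW1 (y + d)); lra).
    pose proof (Hf1neg _ Hv) as Hf1v.
    pose proof (max0 y Hy) as Hy2.
    set (D := w y * f1 (w (y + d)) * w1 (y + d)).
    assert (HD : D > 0).
    { unfold D. assert (0 < - f1 (w (y + d)) * - w1 (y + d)) by (apply Rmult_lt_0_compat; lra).
      assert (0 < w y * (- f1 (w (y + d)) * - w1 (y + d))) by (apply Rmult_lt_0_compat; lra).
      nra. }
    assert (H1 : derivable_pt_lim (fun x => x + d) y 1).
    { pose proof (derivable_pt_lim_plus id (fct_cte d) y 1 0 (derivable_pt_lim_id y) (derivable_pt_lim_const d y)) as H.
      rewrite Rplus_0_r in H. exact H. }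
    assert (H2 : derivable_pt_lim (fun x => w (x + d)) y (w1 (y + d) * 1)).
    { apply (derivable_pt_lim_comp (fun x => x + d) w). exact H1. apply Hw. }
    assert (H3 : derivable_pt_lim (fun x => f (w (x + d))) y (f1 (w (y + d)) * (w1 (y + d) * 1))).
    { apply (derivable_pt_lim_comp (fun x => w (x + d)) f). exact H2. apply Hf. }
    assert (H4 : derivable_pt_lim (fun x => 1 - w x - f (w (x + d))) y (0 - w1 y - f1 (w (y + d)) * (w1 (y + d) * 1))).
    { apply (derivable_pt_lim_minus (fun x => 1 - w x) (fun x => f (w (x + d)))); auto.
      apply (derivable_pt_lim_minus (fct_cte 1) w). apply derivable_pt_lim_const. apply Hw. }
    assert (H5 : derivable_pt_lim (fun x => w x * (1 - w x - f (w (x + d)))) y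
       (w1 y * (1 - w y - f (w (y + d))) + w y * (0 - w1 y - f1 (w (y + d)) * (w1 (y + d) * 1)))).
    { apply (derivable_pt_lim_mult w (fun x => 1 - w x - f (w (x + d)))); auto. }
    assert (H6 : derivable_pt_lim (fun x => c * w1 x) y (c * w2 y)).
    { apply (derivable_pt_lim_scal w1 c y). apply Hw1. }
    assert (H7 : derivable_pt_lim (fun x => - (c * w1 x) - w x * (1 - w x - f (w (x + d)))) y
       (- (c * w2 y) - (w1 y * (1 - w y - f (w (y + d))) + w y * (0 - w1 y - f1 (w (y + d)) * (w1 (y + d) * 1))))).
    { apply (derivable_pt_lim_minus (fun x => - (c * w1 x)) (fun x => w x * (1 - w x - f (w (x + d))))); auto.
      apply (derivable_pt_lim_opp (fun x => c * w1 x)). auto. }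
    assert (H8 : derivable_pt_lim w2 y D).
    { apply (dlim_ext (fun x => - (c * w1 x) - w x * (1 - w x - f (w (x + d))))).
      intro z. rewrite Hw2. reflexivity.
      replace D with (- (c * w2 y) - (w1 y * (1 - w y - f (w (y + d))) + w y * (0 - w1 y - f1 (w (y + d)) * (w1 (y + d) * 1)))).
      exact H7. rewrite Hy, Hy2. unfold D. ring. }
    destruct (deriv_sign w2 y D H8 HD) as [e [He Hee]].
    destruct (MVT_cor2 w1 w2 y (y + e/2) ltac:(lra) (fun c _ => Hw1 c)) as [z [Hz1 Hz2]].
    destruct (Hee (z - y) ltac:(lra)) as [Hp _].
    replace (y + (z - y)) with z in Hp by ring.
    rewrite Hy, Hy2 in *. specialize (HW1 (y + e/2)). nra. }
  assert (Ind : forall n : nat, w1 (x0 + INR n * d) = 0 /\ 0 < w (x0 + INR n * d) < 1).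
  { induction n as [|n IH].
    - simpl. rewrite Rmult_0_l, Rplus_0_r. auto.
    - destruct IH as [I1 I2].
      replace (x0 + INR (S n) * d) with ((x0 + INR n * d) + d) by (rewrite S_INR; ring).
      split. apply T; auto.
      destruct (Hstep _ I1 I2) as [_ Hv]. lra. }
  destruct (Hlm (1 - w0) ltac:(lra)) as [A HA].
  destruct (INR_archimed (- d) (x0 - A) ltac:(lra)) as [n Hn].
  pose proof (Ind n) as [I1 I2].
  destruct (Hstep _ I1 I2) as [_ Hv].
  replace (x0 + INR n * d + d) with (x0 + INR (S n) * d) in Hv by (rewrite S_INR; ring).
  specialize (HA (x0 + INR (S n) * d) ltac:(rewrite S_INR; lra)).
  rewrite Rabs_left1 in HA; lra.
Qed.
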